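(* Let $X$ and $Y$ be separable metrizable spaces and let $f : X \to Y$ be a continuous surjection that is closed--constructible, i.e. for every closed set $F \subseteq X$ the image $f(F)$ is a constructible subset of $Y$. Then $f$ is piece-wise closed: there exist closed sets $Z_1, Z_2, \ldots \subseteq X$ with $X = \bigcup_{n} Z_n$ such that for every $n$ the restriction $f|_{Z_n}$ is a closed map.
   Context: A subset $B \subseteq Y$ is constructible if it belongs to the smallest family of subsets of $Y$ that contains all open sets and is stable under finite intersections and complements (equivalently, $B$ is a finite union of locally closed sets, a locally closed set being the intersection of an open set and a closed set). A function $f: X \to Y$ is closed--constructible if it takes closed subsets of $X$ to constructible subsets of $Y$. A function $f : X \to Y$ is piece-wise closed if $X$ can be written as a countable union of closed sets $Z_n$ such that $f$ is closed on every $Z_n$ (i.e. $f|_{Z_n}$ maps closed subsets of $Z_n$ to closed subsets of $Y$). *)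

(* Defs.v *)
From Stdlib Require Import Reals.
Open Scope R_scope.

Definition is_topology {X : Type} (op : (X -> Prop) -> Prop) : Prop :=
  op (fun _ => True) /\
  (forall U V, op U -> op V -> op (fun x => U x /\ V x)) /\
  (forall F : (X -> Prop) -> Prop, (forall U, F U -> op U) ->
      op (fun x => exists U, F U /\ U x)).

Definition is_closed {X : Type} (op : (X -> Prop) -> Prop) (C : X -> Prop) : Prop :=
  op (fun x => ~ C x).

Definition is_metric {X : Type} (d : X -> X -> R) : Prop :=
  (forall x y, 0 <= d x y) /\
  (forall x y, d x y = 0 <-> x = y) /\
  (forall x y, d x y = d y x) /\
  (forall x y z, d x z <= d x y + d y z).

Definition metric_open {X : Type} (d : X -> X -> R) (U : X -> Prop) : Prop :=
  forall x, U x -> exists eps, 0 < eps /\ forall y, d x y < eps -> U y.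

Definition metrizable {X : Type} (op : (X -> Prop) -> Prop) : Prop :=
  exists d : X -> X -> R, is_metric d /\ forall U, op U <-> metric_open d U.

Definition countable_set {X : Type} (D : X -> Prop) : Prop :=
  exists g : X -> nat, forall x y, D x -> D y -> g x = g y -> x = y.

Definition dense {X : Type} (op : (X -> Prop) -> Prop) (D : X -> Prop) : Prop :=
  forall U, op U -> (exists x, U x) -> exists x, U x /\ D x.

Definition separable {X : Type} (op : (X -> Prop) -> Prop) : Prop :=
  exists D, countable_set D /\ dense op D.

Definition continuous {X Y : Type} (opX : (X -> Prop) -> Prop)
  (opY : (Y -> Prop) -> Prop) (f : X -> Y) : Prop :=
  forall V, opY V -> opX (fun x => V (f x)).

Definition image {X Y : Type} (f : X -> Y) (A : X -> Prop) : Y -> Prop :=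
  fun y => exists x, A x /\ f x = y.

(* Subsets are
   predicates, so we also close under extensional equality of subsets. *)
Inductive constructible {Y : Type} (op : (Y -> Prop) -> Prop) : (Y -> Prop) -> Prop :=
  | constr_open : forall U, op U -> constructible op U
  | constr_inter : forall A B, constructible op A -> constructible op B ->
      constructible op (fun y => A y /\ B y)
  | constr_compl : forall A, constructible op A -> constructible op (fun y => ~ A y)
  | constr_ext : forall A B, (forall y, A y <-> B y) -> constructible op A ->
      constructible op B.

Definition closed_constructible {X Y : Type} (opX : (X -> Prop) -> Prop)
  (opY : (Y -> Prop) -> Prop) (f : X -> Y) : Prop :=
  forall F, is_closed opX F -> constructible opY (image f F).

Definition closed_in_subspace {X : Type} (opX : (X -> Prop) -> Prop)
  (Z C : X -> Prop) : Prop :=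
  (forall x, C x -> Z x) /\
  exists F, is_closed opX F /\ forall x, C x <-> (F x /\ Z x).

Definition closed_on {X Y : Type} (opX : (X -> Prop) -> Prop)
  (opY : (Y -> Prop) -> Prop) (f : X -> Y) (Z : X -> Prop) : Prop :=
  forall C, closed_in_subspace opX Z C -> is_closed opY (image f C).

Definition piecewise_closed {X Y : Type} (opX : (X -> Prop) -> Prop)
  (opY : (Y -> Prop) -> Prop) (f : X -> Y) : Prop :=
  exists Z : nat -> X -> Prop,
    (forall n, is_closed opX (Z n)) /\
    (forall x, exists n, Z n x) /\
    (forall n, closed_on opX opY f (Z n)).

(* Main.v *)
Require Import Defs.
From Stdlib Require Import Reals Lra Lia List Classical ClassicalEpsilon Cantor.
Open Scope R_scope.

Section Metric.
Context {T : Type} (d : T -> T -> R) (hd : is_metric d).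

Lemma d_pos x y : 0 <= d x y. Proof. apply hd. Qed.
Lemma d_refl x : d x x = 0. Proof. apply (proj1 (proj2 hd)). reflexivity. Qed.
Lemma d_sym x y : d x y = d y x. Proof. apply hd. Qed.
Lemma d_tri x y z : d x z <= d x y + d y z. Proof. apply hd. Qed.
Lemma d_eq x y : d x y = 0 -> x = y. Proof. apply (proj1 (proj2 hd)). Qed.

Definition mclosed (S : T -> Prop) := metric_open d (fun x => ~ S x).

Lemma mopen_full : metric_open d (fun _ => True).
Proof. intros x _. exists 1. split; [lra| auto]. Qed.

Lemma mopen_inter U V : metric_open d U -> metric_open d V -> metric_open d (fun x => U x /\ V x).
Proof.
  intros hU hV x [Ux Vx]. destruct (hU x Ux) as [e1 [he1 H1]]. destruct (hV x Vx) as [e2 [he2 H2]].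
  exists (Rmin e1 e2). split. apply Rmin_glb_lt; auto.
  intros y hy. split; [apply H1 | apply H2]; eapply Rlt_le_trans; eauto; [apply Rmin_l | apply Rmin_r].
Qed.

Lemma mopen_ball x r : metric_open d (fun y => d x y < r).
Proof.
  intros y hy. exists (r - d x y). split. lra.
  intros z hz. pose proof (d_tri x y z). lra.
Qed.

Lemma mclosed_cball x r : mclosed (fun y => d x y <= r).
Proof.
  intros y hy. exists (d x y - r). split. lra.
  intros z hz hz'. pose proof (d_tri x z y). rewrite (d_sym z y) in H. lra.
Qed.

Lemma mclosed_inter A B : mclosed A -> mclosed B -> mclosed (fun x => A x /\ B x).
Proof.
  intros hA hB x hx. destruct (classic (A x)) as [Ax|nAx].
  - assert (nBx : ~ B x) by tauto. destruct (hB x nBx) as [e [he H]]. exists e. split; auto.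
    intros y hy [_ By]. exact (H y hy By).
  - destruct (hA x nAx) as [e [he H]]. exists e. split; auto.
    intros y hy [Ay _]. exact (H y hy Ay).
Qed.

Lemma mclosed_closure (S : T -> Prop) : mclosed (fun x => forall e, 0 < e -> exists y, d x y < e /\ S y).
Proof.
  intros x hx. apply not_all_ex_not in hx. destruct hx as [e he].
  apply imply_to_and in he. destruct he as [he he2].
  exists (e/2). split. lra. intros z hz hz2. apply he2.
  destruct (hz2 (e/2)) as [w [hw Sw]]. lra. exists w. split; auto.
  pose proof (d_tri x z w). lra.
Qed.

Lemma mclosed_empty : mclosed (fun _ => False).
Proof. intros x _. exists 1. split; [lra | auto]. Qed.

Lemma not_mclosed S : ~ mclosed S -> exists y, ~ S y /\ forall e, 0 < e -> exists y', d y y' < e /\ S y'.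
Proof.
  intros h. unfold mclosed, metric_open in h. apply not_all_ex_not in h. destruct h as [y hy].
  apply imply_to_and in hy. destruct hy as [hy1 hy2]. exists y. split; auto.
  intros e he. apply NNPP. intros hc. apply hy2. exists e. split; auto.
  intros z hz Sz. apply hc. exists z. auto.
Qed.

Definition Pc (A : T -> Prop) := forall C, mclosed C -> (exists y, C y) ->
  exists U, metric_open d U /\ (exists y, U y /\ C y) /\
   ((forall y, U y -> C y -> A y) \/ (forall y, U y -> C y -> ~ A y)).

Lemma constr_Pc (op : (T -> Prop) -> Prop) (hop : forall U, op U <-> metric_open d U) A :
  constructible op A -> Pc A.
Proof.
  induction 1 as [U hU | A B _ IHA _ IHB | A _ IHA | A B hAB _ IHA].
  - apply hop in hU. intros C hC [y0 Cy0].
    destruct (classic (exists y, U y /\ C y)) as [[y [Uy Cy]] | hn].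
    + exists U. split; [exact hU|]. split; [exists y; auto| left; auto].
    + exists (fun _ => True). split; [apply mopen_full|]. split; [exists y0; auto|].
      right. intros y _ Cy Uy. apply hn. exists y; auto.
  - intros C hC hne. destruct (IHA C hC hne) as [U1 [hU1 [[y1 [U1y1 Cy1]] [hA | hA]]]].
    + set (C2 := fun x => forall e, 0 < e -> exists y, d x y < e /\ (U1 y /\ C y)).
      assert (hC2 : mclosed C2) by apply mclosed_closure.
      assert (ne2 : exists y, C2 y).
      { exists y1. intros e he. exists y1. rewrite d_refl. auto. }
      destruct (IHB C2 hC2 ne2) as [U2 [hU2 [[y2 [U2y2 C2y2]] hB]]].
      exists (fun x => U1 x /\ U2 x). split. apply mopen_inter; auto. split.
      { destruct (hU2 y2 U2y2) as [e [he He]]. destruct (C2y2 e he) as [w [hw [U1w Cw]]].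
        exists w. auto. }
      assert (sub : forall y, U1 y -> C y -> C2 y).
      { intros y U1y Cy e he. exists y. rewrite d_refl. auto. }
      destruct hB as [hB | hB].
      * left. intros y [U1y U2y] Cy. split; auto.
      * right. intros y [U1y U2y] Cy [_ By]. exact (hB y U2y (sub y U1y Cy) By).
    + exists U1. split; [exact hU1|]. split; [exists y1; auto|]. right. intros y U1y Cy [Ay _]. exact (hA y U1y Cy Ay).
  - intros C hC hne. destruct (IHA C hC hne) as [U [hU [hne2 [h | h]]]].
    + exists U. split; [exact hU|]. split; [exact hne2|]. right. intros y Uy Cy hn. exact (hn (h y Uy Cy)).
    + exists U. split; [exact hU|]. split; [exact hne2|]. left; exact h.
  - intros C hC hne. destruct (IHA C hC hne) as [U [hU [hne2 [h | h]]]].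
    + exists U. split; [exact hU|]. split; [exact hne2|]. left. intros y Uy Cy. apply hAB. auto.
    + exists U. split; [exact hU|]. split; [exact hne2|]. right. intros y Uy Cy hn. apply hAB in hn. exact (h y Uy Cy hn).
Qed.

End Metric.

Lemma inv_tail e : 0 < e -> exists N, forall n, (N <= n)%nat -> / INR (S n) < e.
Proof.
  intros he. destruct (archimed_cor1 e he) as [N [h1 h2]]. exists N. intros n hn.
  eapply Rle_lt_trans; [|exact h1]. apply Rinv_le_contravar. apply lt_0_INR. auto.
  apply le_INR. lia.
Qed.

Lemma inv_pos n : 0 < / INR (S n).
Proof. apply Rinv_0_lt_compat. apply lt_0_INR. lia. Qed.

Lemma seq_build {A : Type} (Q : A -> Prop) (mu : A -> R) (e0 : R) (he0 : 0 < e0)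
  (pick : forall e, 0 < e -> exists a, Q a /\ 0 < mu a /\ mu a < e) :
  exists s : nat -> A, (forall n, Q (s n) /\ 0 < mu (s n) /\ mu (s n) < / INR (S n)) /\
     mu (s 0%nat) < e0 /\ (forall n, mu (s (S n)) < mu (s n) / 4).
Proof.
  destruct (pick 1 Rlt_0_1) as [a0 _].
  assert (H : forall e, exists a, 0 < e -> Q a /\ 0 < mu a /\ mu a < e).
  { intros e. destruct (Rlt_dec 0 e) as [he|he].
    - destruct (pick e he) as [a ha]. exists a. auto.
    - exists a0. intros h. contradiction. }
  set (p := fun e => proj1_sig (constructive_indefinite_description _ (H e))).
  assert (hp : forall e, 0 < e -> Q (p e) /\ 0 < mu (p e) /\ mu (p e) < e).
  { intros e he. unfold p. destruct (constructive_indefinite_description _ (H e)) as [a ha]. simpl. auto. }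
  set (s := nat_rect (fun _ => A) (p (Rmin e0 1)) (fun k sk => p (Rmin (mu sk / 4) (/ INR (S (S k)))))).
  assert (h0 : forall n, Q (s n) /\ 0 < mu (s n) /\ mu (s n) < / INR (S n)).
  { induction n as [|k IH].
    - simpl. assert (hm : 0 < Rmin e0 1) by (apply Rmin_glb_lt; lra).
      destruct (hp _ hm) as [q1 [q2 q3]]. split; auto. split; auto.
      eapply Rlt_le_trans; [exact q3|]. eapply Rle_trans; [apply Rmin_r|]. simpl; rewrite Rinv_1; lra.
    - simpl. assert (hm : 0 < Rmin (mu (s k) / 4) (/ INR (S (S k)))).
      { apply Rmin_glb_lt. destruct IH as [_ [IH _]]. lra. apply inv_pos. }
      destruct (hp _ hm) as [q1 [q2 q3]]. split; auto. split; auto.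
      eapply Rlt_le_trans; [exact q3| apply Rmin_r]. }
  exists s. split; auto. split.
  - simpl. assert (hm : 0 < Rmin e0 1) by (apply Rmin_glb_lt; lra).
    destruct (hp _ hm) as [q1 [q2 q3]]. eapply Rlt_le_trans; [exact q3| apply Rmin_l].
  - intros k. simpl. assert (hm : 0 < Rmin (mu (s k) / 4) (/ INR (S (S k)))).
    { apply Rmin_glb_lt. destruct (h0 k) as [_ [IH _]]. lra. apply inv_pos. }
    destruct (hp _ hm) as [q1 [q2 q3]]. eapply Rlt_le_trans; [exact q3| apply Rmin_l].
Qed.

Lemma chain4 (u : nat -> R) : (forall n, 0 < u n) -> (forall n, u (S n) < u n / 4) ->
  forall n n', (n < n')%nat -> u n' < u n / 4.
Proof.
  intros hpos hs n n' hlt. induction n' as [|k IH]. lia.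
  destruct (Nat.eq_dec n k) as [->|hne]. apply hs.
  assert (u k < u n / 4) by (apply IH; lia). pose proof (hs k). pose proof (hpos k). lra.
Qed.

Lemma chain_le (u : nat -> R) : (forall n, 0 < u n) -> (forall n, u (S n) < u n / 4) ->
  forall n n', (n <= n')%nat -> u n' <= u n.
Proof.
  intros hpos hs n n' hle. destruct (Nat.eq_dec n n') as [->|hne]. lra.
  assert (u n' < u n / 4) by (apply chain4; auto; lia). pose proof (hpos n). lra.
Qed.

Definition mclosed_on {X Y : Type} (dX : X -> X -> R) (dY : Y -> Y -> R) (f : X -> Y) (Z : X -> Prop) :=
  forall C, (forall x, C x -> Z x) -> mclosed dX C -> mclosed dY (image f C).

Section Core.
Context {X Y : Type} (dX : X -> X -> R) (dY : Y -> Y -> R) (hdX : is_metric dX) (hdY : is_metric dY)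
  (f : X -> Y)
  (fcont : forall x e, 0 < e -> exists eta, 0 < eta /\ forall y, dX x y < eta -> dY (f x) (f y) < e)
  (K : X -> Prop) (Kcl : mclosed dX K)
  (Hbad : forall x, K x -> forall r, 0 < r -> ~ mclosed_on dX dY f (fun y => K y /\ dX x y <= r)).

Lemma nonconst x r : K x -> 0 < r -> exists x', K x' /\ dX x x' < r /\ f x' <> f x.
Proof.
  intros Kx hr. apply NNPP. intros hn. apply (Hbad x Kx (r/2)). lra.
  intros C hCZ hC y hy.
  destruct (classic (y = f x)) as [->|hne].
  - exists 1. split. lra. intros z _ [c [Cc <-]]. apply hy. exists c. split; auto.
    apply NNPP. intros hne. apply hn. exists c. destruct (hCZ c Cc) as [Kc hc]. split; auto. split; auto. lra.
  - exists (dY y (f x)). split.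
    { destruct (Rle_lt_or_eq_dec 0 _ (d_pos dY hdY y (f x))) as [h|h]; auto.
      exfalso. apply hne. apply (d_eq dY hdY). auto. }
    intros z hz [c [Cc <-]].
    assert (f c = f x).
    { apply NNPP. intros hne2. apply hn. exists c. destruct (hCZ c Cc) as [Kc hc]. split; auto. split; auto. lra. }
    rewrite H in hz. lra.
Qed.

Lemma pick_pt x R e : K x -> 0 < R -> 0 < e ->
  exists x', (K x' /\ dX x x' < R / 4) /\ 0 < dY (f x) (f x') /\ dY (f x) (f x') < e.
Proof.
  intros Kx hR he. destruct (fcont x e he) as [eta [heta Heta]].
  destruct (nonconst x (Rmin eta (R/4)) Kx) as [x' [Kx' [hd hne]]].
  apply Rmin_glb_lt; lra.
  exists x'. split. split; auto. eapply Rlt_le_trans; [exact hd|apply Rmin_r].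
  split.
  - destruct (Rle_lt_or_eq_dec 0 _ (d_pos dY hdY (f x) (f x'))) as [h|h]; auto.
    exfalso. apply hne. symmetry. apply (d_eq dY hdY). auto.
  - apply Heta. eapply Rlt_le_trans; [exact hd|apply Rmin_l].
Qed.

Lemma family x' b s : K x' -> 0 < b -> 0 < s ->
  exists (c : nat -> X) (y : Y),
   (forall n, K (c n) /\ dX x' (c n) <= s /\ dY (f x') (f (c n)) < b) /\
   dY (f x') y <= b /\
   (forall n, 0 < dY y (f (c n)) /\ dY y (f (c n)) < / INR (S n)) /\
   (forall n, dY y (f (c (S n))) < dY y (f (c n)) / 4) /\
   (forall z, exists eta, 0 < eta /\ exists N, forall n, (N <= n)%nat -> eta <= dX z (c n)).
Proof.
  intros Kx' hb hs. destruct (fcont x' b hb) as [eta [heta Heta]].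
  set (r := Rmin (eta/2) s).
  assert (hr : 0 < r) by (apply Rmin_glb_lt; lra).
  pose proof (Hbad x' Kx' r hr) as hn. unfold mclosed_on in hn.
  apply not_all_ex_not in hn. destruct hn as [C hC].
  apply imply_to_and in hC. destruct hC as [hCZ hC]. apply imply_to_and in hC. destruct hC as [hCc hC].
  destruct (not_mclosed dY _ hC) as [y [hy happ]].
  assert (pick : forall e, 0 < e -> exists c, C c /\ 0 < dY y (f c) /\ dY y (f c) < e).
  { intros e he. destruct (happ e he) as [y' [hy' [c [Cc <-]]]]. exists c. split; auto. split; auto.
    destruct (Rle_lt_or_eq_dec 0 _ (d_pos dY hdY y (f c))) as [h|h]; auto.
    exfalso. apply hy. exists c. split; auto. symmetry. apply (d_eq dY hdY). auto. }
  destruct (seq_build C (fun c => dY y (f c)) 1 Rlt_0_1 pick) as [cs [hcs [_ hdec]]].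
  exists cs, y.
  assert (hin : forall n, K (cs n) /\ dX x' (cs n) <= r).
  { intros n. destruct (hcs n) as [Cn _]. apply hCZ. auto. }
  split; [|split; [|split; [|split]]].
  - intros n. destruct (hin n) as [h1 h2]. split; auto. split.
    eapply Rle_trans; [exact h2|apply Rmin_r].
    apply Heta. assert (r <= eta/2) by apply Rmin_l. lra.
  - apply Rnot_lt_le. intros hlt.
    destruct (pick (dY (f x') y - b)) as [c [Cc [_ hc]]]. lra.
    destruct (hCZ c Cc) as [_ hc2].
    assert (dY (f x') (f c) < b) by (apply Heta; assert (r <= eta/2) by apply Rmin_l; lra).
    pose proof (d_tri dY hdY (f x') (f c) y). rewrite (d_sym dY hdY (f c) y) in H0. lra.
  - intros n. destruct (hcs n) as [_ [h1 h2]]. auto.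
  - exact hdec.
  - intros z. apply NNPP. intros hn.
    assert (hacc : forall eta, 0 < eta -> forall N, exists n, (N <= n)%nat /\ dX z (cs n) < eta).
    { intros e he N. apply NNPP. intros hn2. apply hn. exists e. split; auto. exists N.
      intros n hnN. apply Rnot_lt_le. intros hlt. apply hn2. exists n. auto. }
    assert (Cz : C z).
    { apply NNPP. intros nCz. destruct (hCc z nCz) as [e [he He]].
      destruct (hacc e he 0%nat) as [n [_ hn2]]. apply (He (cs n) hn2). apply hcs. }
    apply hy. exists z. split; auto.
    apply (d_eq dY hdY). apply Rle_antisym; [|apply (d_pos dY hdY)].
    apply Rnot_lt_le. intros ht.
    assert (ht2 : 0 < dY (f z) y / 2) by lra.
    destruct (fcont z _ ht2) as [e1 [he1 He1]].
    destruct (inv_tail _ ht2) as [N HN].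
    destruct (hacc e1 he1 N) as [n [hnN hdn]].
    pose proof (He1 _ hdn). pose proof (HN n hnN). destruct (hcs n) as [_ [_ h3]].
    pose proof (d_tri dY hdY (f z) (f (cs n)) y) as T. rewrite (d_sym dY hdY (f (cs n)) y) in T. lra.
Qed.

Record nd := mknd { px : X; pd : R; pr : R }.

Definition Inv (a : nd) := K (px a) /\ 0 < pd a /\ 0 < pr a.

Record RelP (a : nd) (ch : nat -> nat -> nd) (ys : nat -> Y) : Prop := {
  r1 : forall m n, K (px (ch m n)) /\ 0 < pd (ch m n) /\ 0 < pr (ch m n);
  r2 : forall m n, dX (px a) (px (ch m n)) + pr (ch m n) <= pr a;
  r3 : forall m n, pr (ch m n) <= / INR (S n);
  r4 : forall m n, dY (f (px a)) (f (px (ch m n))) + pd (ch m n) <= pd a;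
  r5 : forall m n m' n', (m <> m' \/ n <> n') ->
         pd (ch m n) + pd (ch m' n') < dY (f (px (ch m n))) (f (px (ch m' n')));
  r6 : forall m n, pd (ch m n) < dY (f (px a)) (f (px (ch m n)));
  r7 : forall m, dY (f (px a)) (ys m) < pd a;
  r8 : forall m, exists e, 0 < e /\ e <= dY (ys m) (f (px a)) /\ 
         (forall m' n', m' <> m -> pd (ch m' n') + e <= dY (ys m) (f (px (ch m' n'))));
  r9 : forall m n, pd (ch m n) < dY (ys m) (f (px (ch m n)));
  r10 : forall m e, 0 < e -> exists n, dY (ys m) (f (px (ch m n))) < e;
  r11 : forall e, 0 < e -> exists m, dY (f (px a)) (ys m) < e;
  r12 : forall m z, exists eta, 0 < eta /\ exists N, forall n, (N <= n)%nat -> eta <= dX z (px (ch m n))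
}.

Ltac triY a b c := let T := fresh "T" in pose proof (d_tri dY hdY a b c) as T.
Ltac triX a b c := let T := fresh "T" in pose proof (d_tri dX hdX a b c) as T.

Lemma step_ex a : Inv a -> exists ch ys, RelP a ch ys.
Proof.
  destruct a as [x dl Rr]. intros [Kx [hdl hRr]]. simpl in *.
  destruct (seq_build (fun x' => K x' /\ dX x x' < Rr / 4) (fun x' => dY (f x) (f x')) (dl/2))
    as [xs [hxs [hxs0 hxsdec]]]. lra.
  { intros e he. apply pick_pt; auto. }
  set (bb := fun m => dY (f x) (f (xs m))).
  assert (bpos : forall m, 0 < bb m) by (intros m; apply hxs).
  assert (bdec : forall m, bb (S m) < bb m / 4) by exact hxsdec.
  assert (fam : forall m, exists cy : (nat -> X) * Y,
   (forall n, K (fst cy n) /\ dX (xs m) (fst cy n) <= Rr/8 /\ dY (f (xs m)) (f (fst cy n)) < bb m / 8) /\ dY (f (xs m)) (snd cy) <= bb m / 8 /\ (forall n, 0 < dY (snd cy) (f (fst cy n)) /\ dY (snd cy) (f (fst cy n)) < / INR (S n)) /\ (forall n, dY (snd cy) (f (fst cy (S n))) < dY (snd cy) (f (fst cy n)) / 4) /\ (forall z, exists eta, 0 < eta /\ exists N, forall n, (N <= n)%nat -> eta <= dX z (fst cy n))).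
  { intros m. destruct (family (xs m) (bb m / 8) (Rr / 8)) as [c [y hcy]].
    apply hxs. pose proof (bpos m); lra. lra. exists (c, y). exact hcy. }
  set (cf := fun m => proj1_sig (constructive_indefinite_description _ (fam m))).
  assert (hcf : forall m, _) by (intros m; exact (proj2_sig (constructive_indefinite_description _ (fam m)))).
  set (c := fun m n => fst (cf m) n). set (y := fun m => snd (cf m)).
  set (aa := fun m n => dY (y m) (f (c m n))).
  assert (hc1 : forall m n, K (c m n) /\ dX (xs m) (c m n) <= Rr/8 /\ dY (f (xs m)) (f (c m n)) < bb m / 8)
    by (intros m; apply (hcf m)).
  assert (hy1 : forall m, dY (f (xs m)) (y m) <= bb m / 8) by (intros m; apply (hcf m)).
  assert (apos : forall m n, 0 < aa m n /\ aa m n < / INR (S n)) by (intros m; apply (hcf m)).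
  assert (adec : forall m n, aa m (S n) < aa m n / 4) by (intros m; apply (hcf m)).
  assert (alf : forall m z, exists eta, 0 < eta /\ exists N, forall n, (N <= n)%nat -> eta <= dX z (c m n))
    by (intros m; apply (hcf m)).
  clearbody y c. clear hcf.
  assert (bord : forall m m', (m < m')%nat -> bb m' < bb m / 4) by (apply chain4; auto).
  assert (ble : forall m m', (m <= m')%nat -> bb m' <= bb m) by (apply chain_le; auto).
  assert (bm : forall m, bb m < dl / 2).
  { intros m. pose proof (ble 0%nat m ltac:(lia)). unfold bb in *. lra. }
  assert (aord : forall m n n', (n < n')%nat -> aa m n' < aa m n / 4).
  { intros m. apply chain4. intros n; apply apos. apply adec. }
  assert (Dc : forall m n, 7 * bb m / 8 < dY (f x) (f (c m n)) /\ dY (f x) (f (c m n)) < 9 * bb m / 8).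
  { intros m n. destruct (hc1 m n) as [_ [_ h]]. unfold bb in *.
    triY (f x) (f (xs m)) (f (c m n)). triY (f x) (f (c m n)) (f (xs m)).
    rewrite (d_sym dY hdY (f (c m n)) (f (xs m))) in T0. split; lra. }
  assert (Dy : forall m, 7 * bb m / 8 <= dY (f x) (y m) /\ dY (f x) (y m) <= 9 * bb m / 8).
  { intros m. pose proof (hy1 m) as h. unfold bb in *.
    triY (f x) (f (xs m)) (y m). triY (f x) (y m) (f (xs m)).
    rewrite (d_sym dY hdY (y m) (f (xs m))) in T0. split; lra. }
  assert (Da : forall m n, aa m n <= bb m / 4).
  { intros m n. destruct (hc1 m n) as [_ [_ h]]. pose proof (hy1 m) as h2. unfold aa, bb in *.
    triY (y m) (f (xs m)) (f (c m n)). rewrite (d_sym dY hdY (y m) (f (xs m))) in T. lra. }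
  exists (fun m n => mknd (c m n) (aa m n / 4) (Rmin (Rr/2) (/ INR (S n)))), y.
  constructor; cbn [px pd pr].
  - intros m n. split. apply hc1. split. pose proof (apos m n). lra.
    apply Rmin_glb_lt. lra. apply inv_pos.
  - intros m n. destruct (hc1 m n) as [_ [h _]]. destruct (hxs m) as [[_ h2] _].
    triX x (xs m) (c m n). pose proof (Rmin_l (Rr/2) (/ INR (S n))). lra.
  - intros m n. apply Rmin_r.
  - intros m n. pose proof (Dc m n). pose proof (Da m n). pose proof (bm m). lra.
  - intros m n m' n' hne. destruct (Compare_dec.lt_eq_lt_dec m m') as [[hlt|heq]|hgt].
    + pose proof (bord _ _ hlt). pose proof (Dc m n). pose proof (Dc m' n'). pose proof (Da m n).
      pose proof (Da m' n'). pose proof (bpos m'). pose proof (apos m n). pose proof (apos m' n').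
      triY (f x) (f (c m' n')) (f (c m n)). rewrite (d_sym dY hdY (f (c m' n')) (f (c m n))) in T. lra.
    + subst m'. assert (hn : n <> n') by tauto.
      destruct (Nat.lt_gt_cases n n') as [[hlt|hlt] _]; auto.
      * pose proof (aord m _ _ hlt). pose proof (apos m n). pose proof (apos m n').
        triY (y m) (f (c m n')) (f (c m n)). rewrite (d_sym dY hdY (f (c m n')) (f (c m n))) in T.
        unfold aa in *. lra.
      * pose proof (aord m _ _ hlt). pose proof (apos m n). pose proof (apos m n').
        triY (y m) (f (c m n)) (f (c m n')). unfold aa in *. lra.
    + pose proof (bord _ _ hgt). pose proof (Dc m n). pose proof (Dc m' n'). pose proof (Da m n).
      pose proof (Da m' n'). pose proof (bpos m). pose proof (apos m n). pose proof (apos m' n').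
      triY (f x) (f (c m n)) (f (c m' n')). lra.
  - intros m n. pose proof (Dc m n). pose proof (Da m n). pose proof (bpos m). lra.
  - intros m. pose proof (Dy m). pose proof (bm m). pose proof (bpos m). lra.
  - intros m. exists (bb m / 2). pose proof (bpos m). split. lra. split.
    { pose proof (Dy m). rewrite (d_sym dY hdY (y m) (f x)). lra. }
    intros m' n' hne. destruct (Nat.lt_gt_cases m' m) as [[hlt|hlt] _]; auto.
    + pose proof (bord _ _ hlt). pose proof (Dc m' n'). pose proof (Dy m). pose proof (Da m' n').
      pose proof (bpos m').
      triY (f x) (y m) (f (c m' n')). lra.
    + pose proof (bord _ _ hlt). pose proof (Dc m' n'). pose proof (Dy m). pose proof (Da m' n').
      pose proof (bpos m').
      triY (f x) (f (c m' n')) (y m). rewrite (d_sym dY hdY (f (c m' n')) (y m)) in T. lra.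
  - intros m n. pose proof (apos m n). unfold aa in *. lra.
  - intros m e he. destruct (inv_tail e he) as [N HN]. exists N.
    pose proof (apos m N). pose proof (HN N (le_n _)). unfold aa in *. lra.
  - intros e he. assert (he' : 0 < 8 * e / 9) by lra. destruct (inv_tail _ he') as [N HN]. exists N.
    pose proof (HN N (le_n _)). pose proof (Dy N). destruct (hxs N) as [_ [_ h]]. unfold bb in *. lra.
  - intros m z. destruct (alf m z) as [eta [heta [N HN]]]. exists eta. split; auto. exists N. auto.
Qed.

Lemma step_fun : exists stp : nd -> (nat -> nat -> nd) * (nat -> Y),
  forall a, Inv a -> RelP a (fst (stp a)) (snd (stp a)).
Proof.
  assert (H : forall a, exists p : (nat -> nat -> nd) * (nat -> Y), Inv a -> RelP a (fst p) (snd p)).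
  { intros a. destruct (classic (Inv a)) as [ha|ha].
    - destruct (step_ex a ha) as [ch [ys h]]. exists (ch, ys). auto.
    - exists (fun _ _ => a, fun _ => f (px a)). intros h; contradiction. }
  exists (fun a => proj1_sig (constructive_indefinite_description _ (H a))).
  intros a. exact (proj2_sig (constructive_indefinite_description _ (H a))).
Qed.

Definition node (stp : nd -> (nat -> nat -> nd) * (nat -> Y)) (root : nd) : list (nat * nat) -> nd :=
  fix go l := match l with nil => root | p :: l' => fst (stp (go l')) (fst p) (snd p) end.

Definition pair_dec : forall p q : nat * nat, {p = q} + {p <> q}.
Proof. decide equality; apply Nat.eq_dec. Defined.

Lemma fin_min (g : nat -> R) : (forall n, 0 < g n) -> forall M, exists h, 0 < h /\ forall n, (n < M)%nat -> h <= g n.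
Proof.
  intros hg M. induction M as [|M [h [hh Hh]]].
  - exists 1. split. lra. intros n hn. lia.
  - exists (Rmin h (g M)). split. apply Rmin_glb_lt; auto.
    intros n hn. destruct (Nat.eq_dec n M) as [->|hne]. apply Rmin_r.
    eapply Rle_trans. apply Rmin_l. apply Hh. lia.
Qed.

Lemma core_false (hccm : forall F, mclosed dX F -> Pc dY (image f F)) (x0 : X) (Kx0 : K x0) : False.
Proof.
  destruct step_fun as [stp hstp].
  set (root := mknd x0 1 1).
  set (N := node stp root).
  set (ch := fun l => fst (stp (N l))). set (ys := fun l => snd (stp (N l))).
  assert (Ncons : forall m n l, N ((m, n) :: l) = ch l m n) by reflexivity.
  assert (T0 : forall l, Inv (N l)).
  { induction l as [|[m n] l IH].
    - unfold Inv. simpl. split; auto. lra.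
    - rewrite Ncons. apply (r1 _ _ _ (hstp _ IH)). }
  assert (hR : forall l, RelP (N l) (ch l) (ys l)) by (intros l; apply hstp; auto).
  assert (T1 : forall s l, dX (px (N s)) (px (N (l ++ s))) + pr (N (l ++ s)) <= pr (N s) /\
     dY (f (px (N s))) (f (px (N (l ++ s)))) + pd (N (l ++ s)) <= pd (N s)).
  { intros s l. induction l as [|[m n] l [IH1 IH2]].
    - simpl. rewrite (d_refl dX hdX), (d_refl dY hdY). lra.
    - rewrite <- app_comm_cons. rewrite Ncons.
      pose proof (r2 _ _ _ (hR (l ++ s)) m n). pose proof (r4 _ _ _ (hR (l ++ s)) m n).
      triX (px (N s)) (px (N (l ++ s))) (px (ch (l ++ s) m n)).
      triY (f (px (N s))) (f (px (N (l ++ s)))) (f (px (ch (l ++ s) m n))). split; lra. }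
  assert (T1' : forall s l, dY (f (px (N s))) (f (px (N (l ++ s)))) <= pd (N s)).
  { intros s l. destruct (T1 s l) as [_ h]. destruct (T0 (l ++ s)) as [_ [h2 _]]. lra. }
  assert (T2 : forall u v, (exists l, v = l ++ u) \/ pd (N u) < dY (f (px (N u))) (f (px (N v)))).
  { induction u as [|[m n] w IH].
    - intros v. left. exists v. rewrite app_nil_r. auto.
    - intros v. destruct (IH v) as [[l ->]|h].
      + destruct (list_eq_dec pair_dec l nil)
          as [->|hne].
        * right. cbn [app]. pose proof (r6 _ _ _ (hR w) m n). rewrite Ncons.
          rewrite (d_sym dY hdY). auto.
        * destruct (exists_last hne) as [l' [[m' n'] ->]].
          rewrite <- app_assoc. cbn [app].
          destruct (pair_dec (m', n') (m, n)) as [heq|hne2].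
          { left. exists l'. rewrite heq. auto. }
          right. assert (hmn : m <> m' \/ n <> n').
          { destruct (Nat.eq_dec m m'); [subst; right; intros ->; apply hne2; auto| left; auto]. }
          pose proof (r5 _ _ _ (hR w) m n m' n' hmn).
          pose proof (T1' ((m', n') :: w) l'). rewrite !Ncons in *.
          destruct (T0 (l' ++ (m', n') :: w)) as [_ [hp _]].
          triY (f (px (ch w m n))) (f (px (N (l' ++ (m', n') :: w)))) (f (px (ch w m' n'))).
          rewrite (d_sym dY hdY (f (px (N (l' ++ (m', n') :: w)))) (f (px (ch w m' n')))) in T.
          destruct (T0 ((m,n) :: w)) as [_ [hp2 _]]. rewrite Ncons in hp2.
          lra.
      + right. pose proof (T1' w ((m, n) :: nil)). cbn [app] in H. rewrite Ncons in *.
        triY (f (px (N w))) (f (px (ch w m n))) (f (px (N v))).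
        pose proof (r4 _ _ _ (hR w) m n). lra. }
  assert (T3 : forall t m, exists e, 0 < e /\ forall v, (exists n l, v = l ++ (m, n) :: t) \/
     e <= dY (ys t m) (f (px (N v)))).
  { intros t m. destruct (r8 _ _ _ (hR t) m) as [e8 [he8 [He8 He8']]].
    pose proof (r7 _ _ _ (hR t) m).
    exists (Rmin e8 (pd (N t) - dY (f (px (N t))) (ys t m))). split.
    { apply Rmin_glb_lt; lra. }
    intros v. pose proof (Rmin_l e8 (pd (N t) - dY (f (px (N t))) (ys t m))).
    pose proof (Rmin_r e8 (pd (N t) - dY (f (px (N t))) (ys t m))).
    destruct (T2 t v) as [[l ->]|h].
    - destruct (list_eq_dec pair_dec l nil) as [->|hne].
      + right. cbn [app]. lra.
      + destruct (exists_last hne) as [l' [[m' n'] ->]].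
        rewrite <- app_assoc. cbn [app].
        destruct (Nat.eq_dec m' m) as [->|hne2].
        { left. exists n', l'. auto. }
        right. pose proof (He8' m' n' hne2). pose proof (T1' ((m', n') :: t) l'). rewrite !Ncons in *.
        triY (ys t m) (f (px (N (l' ++ (m', n') :: t)))) (f (px (ch t m' n'))).
        rewrite (d_sym dY hdY (f (px (N (l' ++ (m', n') :: t)))) (f (px (ch t m' n')))) in T. lra.
    - right. triY (f (px (N t))) (ys t m) (f (px (N v))). lra. }
  set (F := fun z => forall e, 0 < e -> exists y, dX z y < e /\ (exists l, y = px (N l))).
  assert (T4 : forall t m z, F z -> f z <> ys t m).
  { intros t m z Fz hfz. destruct (T3 t m) as [e [he He]].
    destruct (fcont z e he) as [eta1 [heta1 Heta1]].
    destruct (r12 _ _ _ (hR t) m z) as [eta2 [heta2 [N0 HN0]]].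
    assert (heta2' : 0 < eta2 / 2) by lra.
    destruct (inv_tail _ heta2') as [N1 HN1].
    set (M := Nat.max N0 N1).
    assert (sub : forall l, dX z (px (N l)) < Rmin eta1 (eta2 / 2) ->
        exists n l', (n < M)%nat /\ l = l' ++ (m, n) :: t).
    { intros l hl. pose proof (Rmin_l eta1 (eta2/2)). pose proof (Rmin_r eta1 (eta2/2)).
      destruct (He l) as [[n [l' ->]]|h].
      - exists n, l'. split; auto. destruct (Nat.lt_ge_cases n M) as [hlt|hge]; auto. exfalso.
        pose proof (HN0 n ltac:(lia)). pose proof (HN1 n ltac:(lia)).
        pose proof (r3 _ _ _ (hR t) m n).
        destruct (T1 ((m, n) :: t) l') as [h1 _]. rewrite Ncons in h1.
        destruct (T0 (l' ++ (m, n) :: t)) as [_ [_ hp]].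
        triX z (px (N (l' ++ (m, n) :: t))) (px (ch t m n)).
        rewrite (d_sym dX hdX (px (N (l' ++ (m, n) :: t))) (px (ch t m n))) in T. lra.
      - exfalso. assert (dY (f z) (f (px (N l))) < e) by (apply Heta1; lra). rewrite hfz in H1. lra. }
    destruct (fin_min (fun n => dY (ys t m) (f (px (ch t m n))) - pd (ch t m n))) with (M := M)
      as [h [hh Hh]].
    { intros n. pose proof (r9 _ _ _ (hR t) m n). lra. }
    destruct (fcont z h hh) as [eta3 [heta3 Heta3]].
    destruct (Fz (Rmin (Rmin eta1 (eta2 / 2)) eta3)) as [y0 [hl [l ->]]].
    { apply Rmin_glb_lt; [apply Rmin_glb_lt|]; lra. }
    pose proof (Rmin_l (Rmin eta1 (eta2 / 2)) eta3). pose proof (Rmin_r (Rmin eta1 (eta2 / 2)) eta3).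
    destruct (sub l ltac:(lra)) as [n [l' [hn ->]]].
    pose proof (Hh n hn). pose proof (Heta3 (px (N (l' ++ (m, n) :: t))) ltac:(lra)) as H3. rewrite hfz in H3.
    pose proof (T1' ((m, n) :: t) l') as H4. rewrite Ncons in H4.
    triY (ys t m) (f (px (N (l' ++ (m, n) :: t)))) (f (px (ch t m n))).
    rewrite (d_sym dY hdY (f (px (N (l' ++ (m, n) :: t)))) (f (px (ch t m n)))) in T. lra. }
  assert (Fcl : mclosed dX F) by apply (mclosed_closure dX hdX).
  assert (FN : forall l, F (px (N l))).
  { intros l e he. exists (px (N l)). rewrite (d_refl dX hdX). split; auto. exists l; auto. }
  set (C := fun q => forall e, 0 < e -> exists y', dY q y' < e /\ (exists t m, y' = ys t m)).
  assert (Ccl : mclosed dY C) by apply (mclosed_closure dY hdY).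
  assert (CY : forall t m, C (ys t m)).
  { intros t m e he. exists (ys t m). rewrite (d_refl dY hdY). split; auto. exists t, m; auto. }
  destruct (hccm F Fcl C Ccl (ex_intro _ _ (CY nil 0%nat))) as [U [hU [[q [Uq Cq]] [hsub|hdis]]]].
  - destruct (hU q Uq) as [e1 [he1 He1]]. destruct (Cq e1 he1) as [y' [hy' [t [m ->]]]].
    destruct (hsub _ (He1 _ hy') (CY t m)) as [z [Fz hz]]. exact (T4 t m z Fz hz).
  - destruct (hU q Uq) as [e1 [he1 He1]]. destruct (Cq e1 he1) as [y' [hy' [t [m ->]]]].
    pose proof (He1 _ hy') as Uy. destruct (hU _ Uy) as [e2 [he2 He2]].
    destruct (r10 _ _ _ (hR t) m e2 he2) as [n hn].
    apply (hdis (f (px (ch t m n)))).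
    + apply He2. auto.
    + intros e he. destruct (r11 _ _ _ (hR ((m, n) :: t)) e he) as [m' hm'].
      rewrite Ncons in hm'. exists (ys ((m, n) :: t) m'). split; auto. exists ((m, n) :: t), m'. auto.
    + exists (px (ch t m n)). split; auto. rewrite <- Ncons. apply FN.
Qed.

End Core.

Lemma closed_on_of {X Y : Type} (opX : (X -> Prop) -> Prop) (opY : (Y -> Prop) -> Prop)
  (dX : X -> X -> R) (dY : Y -> Y -> R) (hopX : forall U, opX U <-> metric_open dX U)
  (hopY : forall U, opY U <-> metric_open dY U) (f : X -> Y) Z :
  mclosed dX Z -> mclosed_on dX dY f Z -> closed_on opX opY f Z.
Proof.
  intros hZ hm C [hCZ [F0 [hF0 hC]]]. unfold is_closed. apply hopY. apply hm. exact hCZ.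
  intros x nCx. unfold is_closed in hF0. apply hopX in hF0.
  assert (h : ~ F0 x \/ ~ Z x). { destruct (classic (F0 x)); [right|left]; auto. intros hz. apply nCx. apply hC. auto. }
  destruct h as [h|h].
  - destruct (hF0 x h) as [e [he He]]. exists e. split; auto. intros y hy Cy. apply (He y hy). apply hC. auto.
  - destruct (hZ x h) as [e [he He]]. exists e. split; auto. intros y hy Cy. apply (He y hy). apply hC. auto.
Qed.

Theorem theorem1 (X Y : Type) (opX : (X -> Prop) -> Prop) (opY : (Y -> Prop) -> Prop)
  (hX : metrizable opX) (hXs : separable opX)
  (hY : metrizable opY) (hYs : separable opY)
  (f : X -> Y) (hf : continuous opX opY f)
  (hsurj : forall y, exists x, f x = y)
  (hcc : closed_constructible opX opY f) :
  piecewise_closed opX opY f.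
Proof.
  destruct hX as [dX [hdX hopX]]. destruct hY as [dY [hdY hopY]].
  destruct hXs as [D [[g hg] hD]].
  assert (clo : forall S, mclosed dX S -> is_closed opX S) by (intros S hS; apply hopX; exact hS).
  assert (fcont : forall x e, 0 < e -> exists eta, 0 < eta /\ forall y, dX x y < eta -> dY (f x) (f y) < e).
  { intros x e he. assert (hV : opY (fun y => dY (f x) y < e)) by (apply hopY; apply (mopen_ball dY hdY)).
    pose proof (hf _ hV) as hU. apply hopX in hU. destruct (hU x) as [eta [heta Heta]].
    rewrite (d_refl dY hdY). auto. exists eta. auto. }
  assert (hccm : forall F, mclosed dX F -> Pc dY (image f F)).
  { intros F hF. apply (constr_Pc dY hdY opY hopY). apply hcc. apply clo. auto. }
  set (M := fun Z : X -> Prop => exists Zs : nat -> X -> Prop, (forall n, is_closed opX (Zs n)) /\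
     (forall x, Z x -> exists n, Zs n x) /\ (forall n, closed_on opX opY f (Zs n))).
  set (G := fun x => exists r, 0 < r /\ M (fun y => dX x y <= r)).
  assert (Lind : exists Zs : nat -> X -> Prop, (forall n, is_closed opX (Zs n)) /\
     (forall x, G x -> exists n, Zs n x) /\ (forall n, closed_on opX opY f (Zs n))).
  { assert (H : forall p : nat * nat, exists Zs : nat -> X -> Prop,
       (forall j, is_closed opX (Zs j) /\ closed_on opX opY f (Zs j)) /\
       (forall d, D d -> g d = fst p -> M (fun y => dX d y <= / INR (S (snd p))) ->
          forall x, dX d x <= / INR (S (snd p)) -> exists j, Zs j x)).
    { intros [n k]. simpl.
      destruct (classic (exists d, D d /\ g d = n /\ M (fun y => dX d y <= / INR (S k)))) as [[d0 [Dd0 [gd0 [Zs [h1 [h2 h3]]]]]]|hn].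
      - exists Zs. split. intros j; auto. intros d Dd gd _ x hx.
        assert (d = d0) by (apply hg; auto; congruence). subst. auto.
      - exists (fun _ _ => False). split.
        + intros j. split. apply clo. apply (mclosed_empty dX).
          intros C [hCZ _]. unfold is_closed. apply hopY. intros y _. exists 1. split. lra.
          intros z _ [c [Cc _]]. exact (hCZ c Cc).
        + intros d Dd gd hM. exfalso. apply hn. exists d. auto. }
    assert (H' : exists ZZ : nat * nat -> nat -> X -> Prop, forall p,
       (forall j, is_closed opX (ZZ p j) /\ closed_on opX opY f (ZZ p j)) /\
       (forall d, D d -> g d = fst p -> M (fun y => dX d y <= / INR (S (snd p))) ->
          forall x, dX d x <= / INR (S (snd p)) -> exists j, ZZ p j x)).
    { exists (fun p => proj1_sig (constructive_indefinite_description _ (H p))).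
      intros p. exact (proj2_sig (constructive_indefinite_description _ (H p))). }
    destruct H' as [ZZ hZZ].
    exists (fun i => ZZ (Cantor.of_nat (fst (Cantor.of_nat i))) (snd (Cantor.of_nat i))).
    split; [|split].
    - intros i. apply hZZ.
    - intros x [r [hr [Zs [h1 [h2 h3]]]]].
      destruct (inv_tail (r/2) ltac:(lra)) as [N HN]. pose proof (HN N (le_n _)) as hN.
      pose proof (inv_pos N) as hN0.
      destruct (hD (fun y => dX x y < / INR (S N))) as [d [hxd Dd]].
      { apply hopX. apply (mopen_ball dX hdX). }
      { exists x. rewrite (d_refl dX hdX). auto. }
      destruct (proj2 (hZZ (g d, N)) d Dd eq_refl) with (x := x) as [j hj].
      { exists Zs. split; auto. split; auto. intros y hy. apply h2.
        pose proof (d_tri dX hdX x d y). cbn [fst snd] in hy. lra. }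
      { cbn [fst snd]. rewrite (d_sym dX hdX). lra. }
      exists (Cantor.to_nat (Cantor.to_nat (g d, N), j)).
      rewrite !Cantor.cancel_of_to. cbn [fst snd]. rewrite ?Cantor.cancel_of_to. exact hj.
    - intros i. apply hZZ. }
  destruct Lind as [Zl [hZl1 [hZl2 hZl3]]].
  set (B := fun x => ~ G x).
  assert (Bcl : mclosed dX B).
  { intros x hx. apply NNPP in hx. destruct hx as [r [hr [Zs [h1 [h2 h3]]]]].
    exists (r/2). split. lra. intros y hy hBy. apply hBy. exists (r/2). split. lra.
    exists Zs. split; auto. split; auto. intros z hz. apply h2.
    pose proof (d_tri dX hdX x y z). lra. }
  assert (allG : forall x, G x).
  { intros x0. apply NNPP. intros Bx0.
    apply (core_false dX dY hdX hdY f fcont B) with (x0 := x0); auto.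
    intros x Bx r hr hm. apply Bx. exists r. split; auto.
    exists (fun n => match n with O => (fun y => B y /\ dX x y <= r) | S j => Zl j end).
    split; [|split].
    - intros [|j]; auto. apply clo. apply (mclosed_inter dX); auto. apply (mclosed_cball dX hdX).
    - intros y hy. destruct (classic (G y)) as [hG|hG].
      + destruct (hZl2 y hG) as [n hn]. exists (S n). auto.
      + exists O. split; auto.
    - intros [|j]; auto. apply (closed_on_of opX opY dX dY hopX hopY). 
      apply (mclosed_inter dX); auto. apply (mclosed_cball dX hdX). exact hm. }
  exists Zl. split; auto.
Qed.
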